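(* If $\overline{\mathcal{G}}$ is compact, then for every $\epsilon>0$ the graph $\mathcal{G}_\epsilon$ is a finite graph.
   Context: $\mathcal{G}$ is a connected, locally finite metric graph with countable vertex set and countable edge set. Each edge has a positive length and is identified with an interval. $\mathcal{G}$ carries the geodesic distance $d$ (infimum of lengths of paths), and $\overline{\mathcal{G}}$ is its metric completion. A designated set of vertices, containing all vertices of degree $1$, forms the boundary vertices. $\mathcal{G}_{int}$ is $\mathcal{G}$ minus the boundary vertices, and $\partial\overline{\mathcal{G}}=\overline{\mathcal{G}}\setminus\mathcal{G}_{int}$. For $\epsilon>0$, $\mathcal{G}_\epsilon$ is the subgraph of $\mathcal{G}$ defined as follows. Its edges are the closed edges of $\mathcal{G}$ containing a point $x$ with $d(x,\partial\overline{\mathcal{G}})\ge\epsilon$. Its vertices are the vertices of $\mathcal{G}$ on which such edges are incident. *)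

(* Defs.v *)
From HB Require Import structures.
From mathcomp Require Import all_boot all_order all_algebra.
From mathcomp Require Import all_classical all_reals all_analysis.
Set Implicit Arguments. Unset Strict Implicit. Unset Printing Implicit Defensive.
Import Order.TTheory GRing.Theory Num.Theory numFieldNormedType.Exports.
Local Open Scope classical_set_scope.
Local Open Scope ring_scope.

(* Combinatorial walks in a multigraph with edge endpoints src/tgt: a walk is a
   list of (edge, orientation); orientation true = traversed from src to tgt. *)
Fixpoint walk_ok {V E : Type} (src tgt : E -> V) (u w : V) (s : seq (E * bool))
  : Prop :=
  match s with
  | [::] => u = w
  | (e, b) :: s' =>
      (if b then src e else tgt e) = u /\ walk_ok src tgt (if b then tgt e else src e) w s'
  end.

Definition degree_one {V E : Type} (src tgt : E -> V) (v : V) : Prop :=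
  exists e, (src e = v \/ tgt e = v) /\ src e <> tgt e /\
    forall e', (src e' = v \/ tgt e' = v) -> e' = e.

Record metric_graph (R : realType) := MetricGraph {
  mg_V : countType;
  mg_E : countType;
  mg_src : mg_E -> mg_V;
  mg_tgt : mg_E -> mg_V;
  mg_len : mg_E -> R;
  mg_bnd : set mg_V;
  mg_len_pos : forall e, 0 < mg_len e;
  mg_locfin : forall v, finite_set [set e | mg_src e = v \/ mg_tgt e = v];
  mg_connected : forall u w, exists s, walk_ok mg_src mg_tgt u w s;
  mg_deg1_bnd : forall v, degree_one mg_src mg_tgt v -> mg_bnd v }.

(* Points of the metric graph: a vertex, or an interior point of an edge e at
   distance t from src e (edge e identified with [0, len e]). *)
Inductive gpoint (V E R : Type) := GV of V | GE of E & R.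
Arguments GV {V E R}. Arguments GE {V E R}.

Unset Implicit Arguments.
Section MG.
Context {R : realType} (G : metric_graph R).
Notation V := (mg_V G). Notation E := (mg_E G).
Notation src := (@mg_src _ G). Notation tgt := (@mg_tgt _ G). Notation len := (@mg_len _ G).
Notation pt := (gpoint V E R).

Definition gvalid (p : pt) : Prop :=
  match p with GV _ => True | GE e t => 0 < t < len e end.

(* ways to leave a point towards a vertex, with the cost *)
Definition gexits (p : pt) : seq (V * R) :=
  match p with
  | GV v => [:: (v, 0)]
  | GE e t => [:: (src e, t); (tgt e, len e - t)]
  end.

Definition walk_len (s : seq (E * bool)) : R := \sum_(x <- s) len x.1.

Definition path_lengths (x y : pt) : set R :=
  [set l | (exists a b s, a \in gexits x /\ b \in gexits y /\
               walk_ok src tgt a.1 b.1 s /\ l = a.2 + walk_len s + b.2)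
        \/ (exists e t t', x = GE e t /\ y = GE e t' /\ l = `|t - t'|)].

Definition gdist (x y : pt) : R := inf (path_lengths x y).

(* The metric completion: Cauchy sequences of points with the pseudo-distance
   cdist u w = lim d(u n, w n). *)
Definition gcauchy (u : nat -> pt) : Prop :=
  (forall n, gvalid (u n)) /\
  forall eps : R, 0 < eps -> exists N, forall m n,
      (N <= m)%N -> (N <= n)%N -> gdist (u m) (u n) < eps.

Definition cdist (u w : nat -> pt) : R := limn (fun n => gdist (u n) (w n) : R^o).

Definition gint (p : pt) : Prop :=
  gvalid p /\ match p with GV v => ~ @mg_bnd _ G v | GE _ _ => True end.

Definition cboundary : set (nat -> pt) :=
  [set u | gcauchy u /\ ~ exists p, gint p /\ cdist u (fun _ => p) = 0].

(* d(x, boundary) >= eps  (inf over the boundary, +oo if empty) *)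
Definition dist_bnd_ge (x : pt) (eps : R) : Prop :=
  forall u, cboundary u -> eps <= cdist (fun _ => x) u.

Definition copen (O : set (nat -> pt)) : Prop :=
  forall u, gcauchy u -> O u -> exists2 r : R, 0 < r &
    forall w, gcauchy w -> cdist u w < r -> O w.

Definition completion_compact : Prop :=
  forall (I : Type) (O : I -> set (nat -> pt)),
    (forall i, copen (O i)) ->
    (forall u, gcauchy u -> exists i, O i u) ->
    exists J : set I, finite_set J /\
      forall u, gcauchy u -> exists i, J i /\ O i u.

Definition on_closed_edge (e : E) (p : pt) : Prop :=
  p = GV (src e) \/ p = GV (tgt e) \/ exists t, p = GE e t /\ 0 < t < len e.

Definition eps_edges (eps : R) : set E :=
  [set e | exists x, on_closed_edge e x /\ dist_bnd_ge x eps].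

Definition eps_vertices (eps : R) : set V :=
  [set v | exists e, eps_edges eps e /\ (src e = v \/ tgt e = v)].

End MG.

(* Main.v *)
Require Import Defs.
Set Warnings "-notation-overridden,-ambiguous-paths,-notation-incompatible-prefix".

From HB Require Import structures.
From mathcomp Require Import all_boot all_order all_algebra.
From mathcomp Require Import all_classical all_reals all_analysis.
From mathcomp Require Import ring lra.
Import Order.TTheory GRing.Theory Num.Theory.
Local Open Scope classical_set_scope.
Local Open Scope ring_scope.

Section Aux.
Context {R : realType} {G : metric_graph R}.
Local Notation V := (mg_V G).
Local Notation E := (mg_E G).
Local Notation src := (@mg_src _ G).
Local Notation tgt := (@mg_tgt _ G).
Local Notation len := (@mg_len _ G).
Local Notation pt := (gpoint V E R).

Lemma walk_ok_cat u w z s1 s2 : walk_ok src tgt u w s1 -> walk_ok src tgt w z s2 ->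
  walk_ok src tgt u z (s1 ++ s2).
Proof.
elim: s1 u => [|[e b] s IH] u /=; first by move=> ->.
by move=> [H1 H2] H3; split => //; apply: IH.
Qed.

Lemma walk_len_cat s1 s2 : walk_len G (s1 ++ s2) = walk_len G s1 + walk_len G s2.
Proof. by rewrite /walk_len big_cat. Qed.

Lemma walk_len_cons x s : walk_len G (x :: s) = len x.1 + walk_len G s.
Proof. by rewrite /walk_len big_cons. Qed.

Lemma walk_len_ge0 s : 0 <= walk_len G s.
Proof.
elim: s => [|x s IH]; first by rewrite /walk_len big_nil.
by rewrite walk_len_cons addr_ge0 // ltW // mg_len_pos.
Qed.

Fixpoint rwalk (s : seq (E * bool)) : seq (E * bool) :=
  match s with [::] => [::] | x :: s' => rwalk s' ++ [:: (x.1, ~~ x.2)] end.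

Lemma rwalk_ok u w s : walk_ok src tgt u w s -> walk_ok src tgt w u (rwalk s).
Proof.
elim: s u => [|[e b] s IH] u /=; first by move=> ->.
move=> [H1 H2]; apply: walk_ok_cat (IH _ H2) _ => /=.
by case: b H1 H2 => /= H1 _; split.
Qed.

Lemma rwalk_len s : walk_len G (rwalk s) = walk_len G s.
Proof.
elim: s => [|x s IH] //=.
by rewrite walk_len_cat IH walk_len_cons walk_len_cons /walk_len big_nil addr0 addrC.
Qed.

Lemma exits_ge0 x a : gvalid G x -> a \in gexits G x -> 0 <= a.2.
Proof.
case: x => [v|e t] /=; first by rewrite inE => _ /eqP ->.
move=> /andP[t0 tl]; rewrite !inE => /orP[] /eqP -> /=; first exact: ltW.
by rewrite subr_ge0 ltW.
Qed.

Lemma PL_ge0 x y l : gvalid G x -> gvalid G y -> path_lengths G x y l -> 0 <= l.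
Proof.
move=> vx vy [[a [b [s [ha [hb [_ ->]]]]]]|[e [t [t' [_ [_ ->]]]]]] //.
by rewrite !addr_ge0 ?walk_len_ge0 // ?(exits_ge0 _ _ vx ha) ?(exits_ge0 _ _ vy hb).
Qed.

Lemma exits_ex x : exists a, a \in gexits G x.
Proof. by case: x => [v|e t]; [exists (v, 0)|exists (src e, t)]; rewrite /= !inE eqxx. Qed.

Lemma PL_n0 x y : nonempty (path_lengths G x y).
Proof.
have [a ha] := exits_ex x; have [b hb] := exits_ex y.
have [s hs] := mg_connected a.1 b.1.
by exists (a.2 + walk_len G s + b.2); left; exists a, b, s.
Qed.

Lemma PL_lb x y : gvalid G x -> gvalid G y -> has_lbound (path_lengths G x y).
Proof. by move=> vx vy; exists 0 => l; apply: PL_ge0. Qed.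

Lemma gdist_le {x y l} : gvalid G x -> gvalid G y -> path_lengths G x y l -> gdist G x y <= l.
Proof. by move=> vx vy hl; apply: ge_inf => //; apply: PL_lb. Qed.

Lemma gdist_ge x y c : (forall l, path_lengths G x y l -> c <= l) -> c <= gdist G x y.
Proof. by move=> h; apply: lb_le_inf; [apply: PL_n0|move=> l; apply: h]. Qed.

Lemma gdist_ge0 x y : gvalid G x -> gvalid G y -> 0 <= gdist G x y.
Proof. by move=> vx vy; apply: gdist_ge => l; apply: PL_ge0. Qed.

Lemma gdist_xx x : gvalid G x -> gdist G x x = 0.
Proof.
move=> vx; apply/le_anti; rewrite gdist_ge0 // andbT.
apply: gdist_le => //; case: x vx => [v|e t] _.
  by left; exists (v, 0), (v, 0), [::]; rewrite /= !inE eqxx /walk_len big_nil !addr0.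
by right; exists e, t, t; rewrite subrr normr0.
Qed.

Lemma PL_sym x y l : path_lengths G x y l -> path_lengths G y x l.
Proof.
rewrite /path_lengths /= => - [[a [b [s [ha [hb [hs ->]]]]]]|[e [t [t' [-> [-> ->]]]]]].
  left; exists b, a, (rwalk s); split => //; split => //; split; first exact: rwalk_ok.
  by rewrite rwalk_len; lra.
by right; exists e, t', t; rewrite distrC.
Qed.

Lemma gdist_sym x y : gdist G x y = gdist G y x.
Proof. by rewrite /gdist; congr inf; apply/seteqP; split => l; apply: PL_sym. Qed.


Lemma join_exits y b a : gvalid G y -> b \in gexits G y -> a \in gexits G y ->
  exists s0, walk_ok src tgt b.1 a.1 s0 /\ walk_len G s0 <= b.2 + a.2.
Proof.
case: y => [v|e t] /=.
  by move=> _; rewrite !inE => /eqP -> /eqP ->; exists [::]; rewrite /walk_len big_nil /= addr0.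
move=> /andP[t0 tl]; rewrite !inE => /orP[] /eqP -> /orP[] /eqP -> /=.
- exists [::]; split => //; rewrite /walk_len big_nil; lra.
- exists [:: (e, true)]; split => //; rewrite walk_len_cons /walk_len big_nil /=; lra.
- exists [:: (e, false)]; split => //; rewrite walk_len_cons /walk_len big_nil /=; lra.
- exists [::]; split => //; rewrite /walk_len big_nil; lra.
Qed.

Arguments join_exits {y b a}.

Lemma shift_exits e t t' b : b \in gexits G (GE e t) ->
  exists c, c \in gexits G (GE e t') /\ c.1 = b.1 /\ c.2 <= b.2 + `|t - t'|.
Proof.
have h1 := ler_norm (t - t'); have h2 := ler_norm (t' - t).
rewrite [`|t' - t|]distrC in h2.
rewrite /= !inE => /orP[] /eqP -> /=.
  by exists (src e, t'); rewrite !inE eqxx; split => //; split => //=; lra.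
by exists (tgt e, len e - t'); rewrite !inE eqxx orbT; split => //; split => //=; lra.
Qed.

Arguments shift_exits {e t} t' {b}.

Lemma PL_tri {x y z l1 l2} : gvalid G y -> path_lengths G x y l1 -> path_lengths G y z l2 ->
  exists l, path_lengths G x z l /\ l <= l1 + l2.
Proof.
move=> vy; rewrite /path_lengths /=.
move=> [[a [b [s1 [ha [hb [hs1 ->]]]]]]|[e [t [t' [-> [-> ->]]]]]];
move=> [[a' [c [s2 [ha' [hc [hs2 ->]]]]]]|[e2 [t2 [t'' [hy [-> ->]]]]]].
- have [s0 [hs0 hl0]] := join_exits vy hb ha'.
  exists (a.2 + walk_len G (s1 ++ s0 ++ s2) + c.2); split.
    left; exists a, c, (s1 ++ s0 ++ s2); split => //; split => //; split => //.
    by apply: walk_ok_cat hs1 _; apply: walk_ok_cat hs0 hs2.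
  by rewrite !walk_len_cat; lra.
- subst y; have [c [hc [hc1 hc2]]] := shift_exits t'' hb.
  exists (a.2 + walk_len G s1 + c.2); split.
    by left; exists a, c, s1; rewrite hc1.
  lra.
- have [d [hd [hd1 hd2]]] := shift_exits t ha'.
  exists (d.2 + walk_len G s2 + c.2); split.
    by left; exists d, c, s2; rewrite hd1.
  rewrite distrC in hd2; lra.
- move: hy => [<- <-]; exists `|t - t''|; split; first by right; exists e, t, t''.
  exact: ler_distD.
Qed.

Lemma gdist_tri x y z : gvalid G x -> gvalid G y -> gvalid G z ->
  gdist G x z <= gdist G x y + gdist G y z.
Proof.
move=> vx vy vz.
have key l1 l2 : path_lengths G x y l1 -> path_lengths G y z l2 -> gdist G x z <= l1 + l2.
  move=> h1 h2; have [l [hl hle]] := PL_tri vy h1 h2.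
  exact: le_trans (gdist_le vx vz hl) hle.
have H1 l1 : path_lengths G x y l1 -> gdist G x z - gdist G y z <= l1.
  move=> h1; have : gdist G x z - l1 <= gdist G y z.
    by apply: gdist_ge => l2 h2; have := key _ _ h1 h2; lra.
  lra.
have : gdist G x z - gdist G y z <= gdist G x y by apply: gdist_ge.
lra.
Qed.

Arguments gdist_tri {x y z}.

Lemma cst_cauchy {x} : gvalid G x -> gcauchy G (fun _ => x).
Proof. by move=> vx; split => // e e0; exists 0%N => m n _ _; rewrite gdist_xx. Qed.

Lemma dseq_cvg u w : gcauchy G u -> gcauchy G w ->
  cvgn (fun n => gdist G (u n) (w n) : R^o).
Proof.
move=> [vu cu] [vw cw]; apply/cauchy_cvgP; apply: cauchy_exP => e e0.
have e2 : 0 < e / 2 by rewrite divr_gt0.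
have [N1 h1] := cu _ e2; have [N2 h2] := cw _ e2.
exists (gdist G (u (maxn N1 N2)) (w (maxn N1 N2)) : R^o).
exists (maxn N1 N2) => // n /= hn.
set N := maxn N1 N2 in hn *.
have hN1 : (N1 <= N)%N by rewrite leq_maxl.
have hN2 : (N2 <= N)%N by rewrite leq_maxr.
have hn1 : (N1 <= n)%N by apply: leq_trans hn.
have hn2 : (N2 <= n)%N by apply: leq_trans hn.
have a1 := h1 _ _ hN1 hn1; have a2 := h1 _ _ hn1 hN1.
have b1 := h2 _ _ hN2 hn2; have b2 := h2 _ _ hn2 hN2.
have t1 := gdist_tri (vu N) (vu n) (vw N).
have t2 := gdist_tri (vu n) (vw n) (vw N).
have t3 := gdist_tri (vu n) (vu N) (vw n).
have t4 := gdist_tri (vu N) (vw N) (vw n).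
rewrite /ball /= ltr_norml; apply/andP; split; lra.
Qed.

Lemma cdist_tri {u v w} : gcauchy G u -> gcauchy G v -> gcauchy G w ->
  cdist G u w <= cdist G u v + cdist G v w.
Proof.
move=> cu cv cw; rewrite /cdist -limD; [|exact: dseq_cvg|exact: dseq_cvg].
apply: ler_lim; [exact: dseq_cvg| |].
  by apply: is_cvgD; exact: dseq_cvg.
apply: nearW => n /=; apply: gdist_tri; [exact: cu.1|exact: cv.1|exact: cw.1].
Qed.

Lemma cdist_sym u w : cdist G u w = cdist G w u.
Proof.
rewrite /cdist; have -> : (fun n => gdist G (u n) (w n) : R^o) = (fun n => gdist G (w n) (u n) : R^o) by apply/funext => n; rewrite gdist_sym.
by []. Qed.

Lemma cdist_cst p x : cdist G (fun _ => p) (fun _ => x) = gdist G p x.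
Proof. by rewrite /cdist lim_cst. Qed.

Lemma cdist_self {w} : gcauchy G w -> cdist G w w = 0.
Proof.
move=> [vw _]; rewrite /cdist.
have -> : (fun n => gdist G (w n) (w n) : R^o) = (fun _ => 0 : R^o).
  by apply/funext => n; rewrite gdist_xx.
by rewrite lim_cst.
Qed.

Lemma oce_valid {e x} : on_closed_edge G e x -> gvalid G x.
Proof. by move=> [->|[->|[t [-> h]]]]. Qed.

Lemma seq_lb (s : seq E) : exists r : R, 0 < r /\ forall e, e \in s -> r <= len e.
Proof.
elim: s => [|e s [r [r0 hr]]]; first by exists 1.
exists (Num.min r (len e)); split; first by rewrite lt_min r0 mg_len_pos.
move=> e'; rewrite inE => /orP[/eqP ->|he']; rewrite ge_min ?lexx ?orbT //.
by rewrite hr.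
Qed.

Lemma set_lb {S : set E} : finite_set S -> exists r : R, 0 < r /\ forall e, S e -> r <= len e.
Proof.
move=> fS; have [r [r0 hr]] := seq_lb (finmap.enum_fset (fset_set S)); exists r; split => // e he.
by apply: hr; rewrite in_fset_set // inE.
Qed.

Lemma loc {p} : gvalid G p -> exists r : R, 0 < r /\ exists F : set E, finite_set F /\
  forall e x, on_closed_edge G e x -> gdist G p x < r -> F e.
Proof.
case: p => [v|e0 t0] vp.
  have [r [r0 hr]] := set_lb (mg_locfin v).
  exists r; split => //; exists [set e | src e = v \/ tgt e = v]; split; first exact: mg_locfin.
  move=> e x hx hd; case: (pselect (src e = v \/ tgt e = v)) => // nS; exfalso.
  suff : r <= gdist G (GV v) x by rewrite leNgt hd.
  have vx := oce_valid hx.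
  apply: gdist_ge => l; rewrite /path_lengths /=.
  move=> [[a [b [s [ha [hb [hs ->]]]]]]|[e1 [t [t' [// _]]]]].
  move: ha; rewrite inE => /eqP ha; subst a => /=.
  have b0 := exits_ge0 _ _ vx hb.
  case: s hs => [|[e' b'] s] /= hs.
    exfalso; rewrite hs in nS; apply: nS.
    case: hx => [hx|[hx|[t [hx _]]]]; subst x; move: hb; rewrite /= !inE.
    - by move/eqP => -> /=; left.
    - by move/eqP => -> /=; right.
    - by move=> /orP[] /eqP -> /=; [left|right].
  case: hs => hs _.
  have he' : src e' = v \/ tgt e' = v by case: b' hs => /= ->; [left|right].
  have := hr _ he'; have := walk_len_ge0 s.
  rewrite walk_len_cons /=; lra.
have /andP[t00 t0l] := vp.
exists (Num.min t0 (len e0 - t0)); split; first by rewrite lt_min t00 subr_gt0.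
exists [set e0]; split; first exact: finite_set1.
move=> e x hx hd; case: (pselect (e = e0)) => // nS; exfalso.
suff : Num.min t0 (len e0 - t0) <= gdist G (GE e0 t0) x by rewrite leNgt hd.
have vx := oce_valid hx.
apply: gdist_ge => l; rewrite /path_lengths /=.
move=> [[a [b [s [ha [hb [hs ->]]]]]]|[e1 [t [t' [[<- _] hx']]]]].
  have b0 := exits_ge0 _ _ vx hb; have w0 := walk_len_ge0 s.
  have : Num.min t0 (len e0 - t0) <= a.2.
    by move: ha; rewrite /= !inE => /orP[] /eqP -> /=; rewrite ge_min lexx ?orbT.
  lra.
exfalso; case: hx' => hx' _; subst x.
case: hx => [h|[h|[t1 [h _]]]]; try discriminate.
by case: h => he _; apply: nS; rewrite he.
Qed.
End Aux.

Theorem lemma2p3 (R : realType) (G : metric_graph R) :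
  completion_compact G ->
  forall eps : R, 0 < eps ->
    finite_set (eps_edges G eps) /\ finite_set (eps_vertices G eps).
Proof.
move=> Hc eps eps0.
have hex1 : forall p : gpoint (mg_V G) (mg_E G) R, exists r : R,
    gvalid G p -> 0 < r /\ exists F : set (mg_E G), finite_set F /\
      forall e x, on_closed_edge G e x -> gdist G p x < r -> F e.
  move=> p; case: (pselect (gvalid G p)) => vp; last by exists 1.
  by have [r hr] := loc vp; exists r.
have [rf hrf] := choice hex1.
have hex2 : forall p : gpoint (mg_V G) (mg_E G) R, exists F : set (mg_E G),
    finite_set F /\ (gvalid G p ->
      forall e x, on_closed_edge G e x -> gdist G p x < rf p -> F e).
  move=> p; case: (pselect (gvalid G p)) => vp; last by exists set0.
  by have [_ [F [fF hF]]] := hrf p vp; exists F.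
have [Ff hFf] := choice hex2.
pose O (i : option (gpoint (mg_V G) (mg_E G) R)) : set (nat -> gpoint (mg_V G) (mg_E G) R) :=
  match i with
  | Some p => [set w | gvalid G p /\ cdist G (fun _ => p) w < rf p]
  | None => [set w | exists u, cboundary G u /\ cdist G u w < eps]
  end.
have hO : forall i, copen G (O i).
  case => [p|] u cu /=.
    move=> [vp hu]; exists (rf p - cdist G (fun _ => p) u); first by rewrite subr_gt0.
    move=> w cw huw; split => //.
    have := cdist_tri (cst_cauchy vp) cu cw; lra.
  move=> [b [[cb nb] hb]]; exists (eps - cdist G b u); first by rewrite subr_gt0.
  move=> w cw huw; exists b; split; first by split.
  have := cdist_tri cb cu cw; lra.
have hcov : forall u, gcauchy G u -> exists i, O i u.
  move=> w cw; case: (pselect (cboundary G w)) => hb.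
    by exists None; exists w; split => //; rewrite cdist_self.
  have [p [gp hp]] : exists p, gint G p /\ cdist G w (fun _ => p) = 0.
    by apply: contrapT => nex; apply: hb; split.
  exists (Some p); split; first exact: gp.1.
  by rewrite cdist_sym hp; have [] := hrf p gp.1.
have [J [Jfin cov]] := Hc _ O hO hcov.
pose FF (i : option (gpoint (mg_V G) (mg_E G) R)) : set (mg_E G) :=
  match i with Some p => Ff p | None => set0 end.
have hE : finite_set (eps_edges G eps).
  apply: (sub_finite_set (B := \bigcup_(i in J) FF i)).
    move=> e [x [hx hd]]; have vx := oce_valid hx.
    have [i [Ji Oi]] := cov _ (cst_cauchy vx).
    exists i => //; case: i Ji Oi => [p|] Ji /=.
      move=> [vp hlt]; rewrite cdist_cst in hlt.
      exact: (hFf p).2 vp e x hx hlt.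
    move=> [u [cu hu]]; have := hd u cu; rewrite cdist_sym; lra.
  apply: bigcup_finite => // -[p|] _ /=; [exact: (hFf p).1|exact: finite_set0].
split => //.
apply: (sub_finite_set (B := (@mg_src _ G) @` eps_edges G eps `|` (@mg_tgt _ G) @` eps_edges G eps)).
  move=> v [e [he [<-|<-]]]; [left|right]; by exists e.
by rewrite finite_setU; split; apply: finite_image.
Qed.
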